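(* Let $n\ge 3$, $0<m<\frac{n-2}{n}$, $m\ne\frac{n-2}{n+2}$, $\lambda>0$, $\beta>0$. Let $v$ be the radially symmetric solution described in the context, $w(s)=r^2v(r)^{1-m}$ with $s=\log r$, $h(s)=w(s)-\frac{2(n-1)(n-2-nm)}{(1-m)\beta}s$, $h_1(s)=h(s)+\frac{(n-1)[n-2-(n+2)m]}{(1-m)\beta}\log s$, $K(\lambda,\beta)=\lim_{s\to\infty}h_1(s)$ (a finite limit), \[ h_2(s)=h_1(s)-K(\lambda,\beta)-\frac{(n-1)(n-2-(n+2)m)^2}{2(n-2-nm)(1-m)\beta}\cdot\frac{1+\log s}{s}, \] and \[ a_1(\lambda,\beta)=\frac{2(1-2m)(n-1)(n-2-nm)}{(1-m)^2}+\frac{(n-1)(n-2-(n+2)m)^2}{(1-m)^2}+\frac{n-2-(n+2)m}{1-m}K(\lambda,\beta)\beta . \] Then \[ h_2(s)=-\frac{(1-m)a_1(\lambda,\beta)}{2(n-2-nm)\beta s}+\frac{\varepsilon(s)}{s}\quad\text{as }s\to\infty, \] where $\varepsilon(s)\to0$ as $s\to\infty$.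
   Context: $v=v(r)$, $r=|x|$, is the unique radially symmetric positive classical solution of $\frac{n-1}{m}\Delta v^m+\frac{2\beta}{1-m}v+\beta x\cdot\nabla v=0$ in $\mathbb{R}^n$ with $v(0)=\lambda$. *)

(* Defs.v *)
From Stdlib Require Import Reals.
From Coquelicot Require Import Coquelicot.
Open Scope R_scope.

(* Radial profile v : R -> R, only its values on [0, +oo) matter.
   u = v^m (real power, v > 0). The equation
     (n-1)/m Δ(v^m) + 2β/(1-m) v + β x·∇v = 0
   for a radial function reads, for r > 0,
     (n-1)/m (u'' + (n-1)/r u') + 2β/(1-m) v + β r v' = 0.
   Regularity at the origin (classical C^2 radial solution): v(0) = λ,
   v continuous at 0+, and u'(r) -> 0 as r -> 0+. *)
Definition radial_sol (n : nat) (m beta lambda : R) (v : R -> R) : Prop :=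
  let u := fun t => Rpower (v t) m in
  (forall r, 0 <= r -> 0 < v r) /\
  v 0 = lambda /\
  filterlim v (at_right 0) (locally lambda) /\
  (forall r, 0 < r ->
     ex_derive v r /\ ex_derive u r /\ ex_derive (Derive u) r) /\
  filterlim (Derive u) (at_right 0) (locally 0) /\
  (forall r, 0 < r ->
     (INR n - 1) / m * (Derive (Derive u) r + (INR n - 1) / r * Derive u r)
     + 2 * beta / (1 - m) * v r + beta * r * Derive v r = 0).

Definition w_fun (m : R) (v : R -> R) (s : R) : R :=
  exp (2 * s) * Rpower (v (exp s)) (1 - m).

Definition h_fun (n : nat) (m beta : R) (v : R -> R) (s : R) : R :=
  w_fun m v s - 2 * (INR n - 1) * (INR n - 2 - INR n * m) / ((1 - m) * beta) * s.

Definition h1_fun (n : nat) (m beta : R) (v : R -> R) (s : R) : R :=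
  h_fun n m beta v s
  + (INR n - 1) * (INR n - 2 - (INR n + 2) * m) / ((1 - m) * beta) * ln s.

Definition h2_fun (n : nat) (m beta K : R) (v : R -> R) (s : R) : R :=
  h1_fun n m beta v s - K
  - (INR n - 1) * (INR n - 2 - (INR n + 2) * m) ^ 2
      / (2 * (INR n - 2 - INR n * m) * (1 - m) * beta) * ((1 + ln s) / s).

Definition a1 (n : nat) (m beta K : R) : R :=
  2 * (1 - 2 * m) * (INR n - 1) * (INR n - 2 - INR n * m) / (1 - m) ^ 2
  + (INR n - 1) * (INR n - 2 - (INR n + 2) * m) ^ 2 / (1 - m) ^ 2
  + (INR n - 2 - (INR n + 2) * m) / (1 - m) * K * beta.

(* Main.v *)
Require Import Defs.
From Stdlib Require Import Reals.
From Coquelicot Require Import Coquelicot.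
From Stdlib Require Import Lra Lia Classical.
Open Scope R_scope.


Lemma deriv_sys (N m beta : R) (v u : R -> R) :
  0 < m -> m < 1 -> 1 < N ->
  (forall r, 0 < r -> 0 < v r) ->
  (forall r, 0 < r -> u r = exp (m * ln (v r))) ->
  (forall r, 0 < r -> ex_derive v r /\ ex_derive u r /\ ex_derive (Derive u) r) ->
  (forall r, 0 < r -> Derive u r = m * u r * Derive v r / v r) ->
  (forall r, 0 < r ->
     (N - 1) / m * (Derive (Derive u) r + (N - 1) / r * Derive u r)
     + 2 * beta / (1 - m) * v r + beta * r * Derive v r = 0) ->
  forall s,
  let W := fun s => exp (2 * s) * exp ((1 - m) * ln (v (exp s))) in
  let Q := fun s => exp s * Derive u (exp s) / u (exp s) in
  is_derive W s (W s * (2 + (1 - m) / m * Q s)) /\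
  is_derive Q s ((2 - N) * Q s - Q s ^ 2
                 - beta / (N - 1) * W s * (2 * m / (1 - m) + Q s)).
Proof.
  intros Hm0 Hm1 HN Hv Hu Hd HDu Heq s W Q.
  assert (Hr : 0 < exp s) by apply exp_pos.
  destruct (Hd _ Hr) as [Dv [Du DDu]].
  assert (Hvr := Hv _ Hr).
  assert (Hur : u (exp s) = exp (m * ln (v (exp s)))) by auto.
  assert (Hupos : 0 < u (exp s)) by (rewrite Hur; apply exp_pos).
  split.
  - unfold W. auto_derive.
    + split; auto.
    + change (Derive (fun x : R => v x)) with (Derive v).
      unfold Q. rewrite (HDu _ Hr). field. split; lra.
  - unfold Q. auto_derive.
    + repeat split; auto. lra.
    + change (Derive (fun x : R => Derive u x)) with (Derive (Derive u)).
      change (Derive (fun x : R => u x)) with (Derive u).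
      assert (HE := Heq _ Hr).
      assert (HD2 : Derive (Derive u) (exp s) = - (N - 1) / exp s * Derive u (exp s)
         - m / (N - 1) * (2 * beta / (1 - m) * v (exp s) + beta * exp s * Derive v (exp s))).
      { apply Rminus_diag_uniq. rewrite <- (Rmult_0_r (m / (N - 1))). rewrite <- HE.
        field. repeat split; lra. }
      rewrite HD2. unfold W.
      assert (H2s : exp (2 * s) = exp s * exp s) by (rewrite <- exp_plus; f_equal; ring).
      assert (HE1 : exp ((1 - m) * ln (v (exp s))) = v (exp s) / u (exp s)).
      { rewrite Hur. apply (Rmult_eq_reg_r (exp (m * ln (v (exp s))))). 2: apply Rgt_not_eq, exp_pos.
        rewrite <- exp_plus. field_simplify. 2: apply Rgt_not_eq, exp_pos.
        replace ((1 - m) * ln (v (exp s)) + m * ln (v (exp s))) with (ln (v (exp s))) by ring.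
        apply exp_ln; auto. }
      rewrite H2s, HE1. rewrite (HDu _ Hr). field. repeat split; lra.
Qed.

Definition ev (P : R -> Prop) := exists M, forall s, M <= s -> P s.
Definition tends (f : R -> R) (l : R) := forall eps, 0 < eps -> ev (fun s => Rabs (f s - l) < eps).
Definition tinf (f : R -> R) := forall B, ev (fun s => B <= f s).

Lemma ev_and P Q : ev P -> ev Q -> ev (fun s => P s /\ Q s).
Proof.
  intros [M1 H1] [M2 H2]. exists (Rmax M1 M2). intros s Hs.
  split; [apply H1 | apply H2]; eapply Rle_trans; eauto; [apply Rmax_l | apply Rmax_r].
Qed.

Lemma ev_ge P a : ev P -> ev (fun s => a <= s /\ P s).
Proof.
  intros [M H]. exists (Rmax a M). intros s Hs. split.
  - eapply Rle_trans; [apply Rmax_l|eauto].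
  - apply H. eapply Rle_trans; [apply Rmax_r|eauto].
Qed.

Lemma ev_mono (P Q : R -> Prop) : ev P -> (forall s, P s -> Q s) -> ev Q.
Proof. intros [M H] HPQ. exists M. auto. Qed.

Lemma mono_le (g dg : R -> R) a x y :
  (forall s, a <= s -> is_derive g s (dg s)) -> a <= x -> x <= y ->
  (forall t, x <= t <= y -> dg t <= 0) -> g y <= g x.
Proof.
  intros HD Hax Hxy Hneg.
  destruct (Rle_lt_or_eq_dec _ _ Hxy) as [Hlt|Heq]; [|subst; lra].
  destruct (MVT_cor2 g dg x y Hlt) as [c [Hc1 Hc2]].
  - intros c Hc. apply is_derive_Reals. apply HD. lra.
  - assert (dg c <= 0) by (apply Hneg; lra). nra.
Qed.

Lemma mvt_ub (g dg : R -> R) a x y c :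
  (forall s, a <= s -> is_derive g s (dg s)) -> a <= x -> x <= y ->
  (forall t, x <= t <= y -> dg t <= c) -> g y - g x <= c * (y - x).
Proof.
  intros HD Hax Hxy Hb.
  assert (H := mono_le (fun t => g t - c * t) (fun t => dg t - c) a x y).
  cut ((fun t => g t - c * t) y <= (fun t => g t - c * t) x). { simpl; lra. }
  apply H; auto.
  - intros s Hs. specialize (HD s Hs).
    auto_derive. { exists (dg s); auto. }
    change (Derive (fun x => g x)) with (Derive g).
    rewrite (is_derive_unique g s (dg s)); auto. ring.
  - intros t Ht. specialize (Hb t Ht). lra.
Qed.

Lemma mvt_lb (g dg : R -> R) a x y c :
  (forall s, a <= s -> is_derive g s (dg s)) -> a <= x -> x <= y ->
  (forall t, x <= t <= y -> c <= dg t) -> c * (y - x) <= g y - g x.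
Proof.
  intros HD Hax Hxy Hb.
  assert (H := mvt_ub (fun t => - g t) (fun t => - dg t) a x y (- c)).
  cut (- g y - - g x <= - c * (y - x)). { lra. }
  apply H; auto.
  - intros s Hs. apply (is_derive_opp g s (dg s)). auto.
  - intros t Ht. specialize (Hb t Ht). lra.
Qed.

Lemma deriv_cont (g : R -> R) d x : is_derive g x d ->
  forall eps, 0 < eps -> exists del, 0 < del /\ forall y, Rabs (y - x) < del -> Rabs (g y - g x) < eps.
Proof.
  intros H eps Heps.
  apply is_derive_Reals in H.
  assert (Hc : continuity_pt g x).
  { apply derivable_continuous_pt. exists d. exact H. }
  destruct (Hc eps Heps) as [del [Hdel Hd]].
  exists del. split; auto. intros y Hy.
  destruct (Req_dec y x) as [->|Hne].
  - rewrite Rminus_diag, Rabs_R0; auto.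
  - apply (Hd y). split; [split; [exact I| auto] | exact Hy].
Qed.

Lemma barrier (g dg : R -> R) a L :
  (forall s, a <= s -> is_derive g s (dg s)) -> g a < L ->
  (forall s, a <= s -> g s = L -> dg s < 0) -> forall s, a <= s -> g s < L.
Proof.
  intros HD Ha Hcr t Hat.
  destruct (Rlt_or_le (g t) L) as [Hlt|Hge]; auto. exfalso.
  assert (Hat' : a < t). { destruct (Rle_lt_or_eq_dec _ _ Hat) as [h|h]; auto. subst; lra. }
  set (E := fun x => a <= x <= t /\ forall y, a <= y <= x -> g y < L).
  assert (Hb : bound E). { exists t. intros x [[_ Hx] _]. auto. }
  assert (Hne : exists x, E x). { exists a. split; [lra|]. intros y Hy. replace y with a by lra. auto. }
  destruct (completeness E Hb Hne) as [tau [Hub Hlub]].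
  assert (Hat1 : a <= tau) by (apply Hub; destruct Hne as [x Hx]; unfold E; split; [lra|]; intros y Hy; replace y with a by lra; auto).
  assert (Htt : tau <= t). { apply Hlub. intros x [[_ Hx] _]; auto. }
  assert (F1 : forall y, a <= y < tau -> g y < L).
  { intros y Hy. destruct (classic (exists x, E x /\ y < x)) as [[x [[Hx1 Hx2] Hyx]]|Hn].
    - apply Hx2. lra.
    - assert (tau <= y); [|lra]. apply Hlub. intros x Ex.
      destruct (Rle_or_lt x y); auto. exfalso; apply Hn; eauto. }
  destruct (total_order_T (g tau) L) as [[Hl|He]|Hg].
  -
    assert (Htau : tau < t). { destruct (Rle_lt_or_eq_dec _ _ Htt) as [h|h]; auto. subst; lra. }
    destruct (deriv_cont g (dg tau) tau (HD tau Hat1) (L - g tau)) as [del [Hdel Hc]]; [lra|].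
    assert (E (Rmin (tau + del / 2) t)).
    { split. { split; [|apply Rmin_r]. apply Rmin_case; lra. }
      intros y Hy. destruct (Rlt_or_le y tau) as [Hy1|Hy1]. { apply F1; lra. }
      assert (Hm : Rmin (tau + del/2) t <= tau + del/2) by apply Rmin_l.
      assert (Rabs (y - tau) < del) by (rewrite Rabs_right; lra).
      specialize (Hc y H). apply Rabs_def2 in Hc. lra. }
    assert (Rmin (tau + del/2) t <= tau) by (apply Hub; auto).
    revert H0. apply Rmin_case; lra.
  -
    assert (Hat2 : a < tau). { destruct (Rle_lt_or_eq_dec _ _ Hat1) as [h|h]; auto. subst; lra. }
    assert (Hd := Hcr tau Hat1 He).
    assert (HDR := proj1 (is_derive_Reals g tau (dg tau)) (HD tau Hat1)).
    destruct (HDR (- dg tau / 2)) as [del Hdel]; [lra|].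
    set (h := - Rmin (del / 2) ((tau - a) / 2)).
    assert (Hh1 : h < 0). { unfold h. apply Ropp_lt_gt_0_contravar. apply Rmin_case; generalize (cond_pos del); lra. }
    assert (Hh2 : Rabs h < del).
    { rewrite Rabs_left; auto. unfold h. rewrite Ropp_involutive.
      generalize (Rmin_l (del/2) ((tau - a)/2)) (cond_pos del). lra. }
    assert (Hh3 : a <= tau + h). { unfold h. generalize (Rmin_r (del/2) ((tau - a)/2)). lra. }
    specialize (Hdel h (Rlt_not_eq _ _ Hh1) Hh2).
    assert (Hgy : g (tau + h) < L) by (apply F1; lra).
    apply Rabs_def2 in Hdel. destruct Hdel as [Hd1 Hd2].
    assert (Hq : 0 < (g (tau + h) - g tau) / h).
    { replace ((g (tau+h) - g tau)/h) with ((g tau - g (tau+h)) / (-h)) by (field; lra).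
      apply Rdiv_lt_0_compat; lra. }
    lra.
  -
    assert (Hat2 : a < tau). { destruct (Rle_lt_or_eq_dec _ _ Hat1) as [h|h]; auto. subst; lra. }
    destruct (deriv_cont g (dg tau) tau (HD tau Hat1) (g tau - L)) as [del [Hdel Hc]]; [lra|].
    set (y := Rmax a (tau - del / 2)).
    assert (Hy1 : a <= y < tau). { unfold y. split; [apply Rmax_l|]. apply Rmax_case; lra. }
    assert (Rabs (y - tau) < del).
    { rewrite Rabs_left; [|lra]. unfold y. generalize (Rmax_r a (tau - del/2)). lra. }
    specialize (Hc y H). apply Rabs_def2 in Hc. specialize (F1 y Hy1). lra.
Qed.

Lemma ev_below (g dg : R -> R) a L eta :
  (forall s, a <= s -> is_derive g s (dg s)) -> 0 < eta ->
  (forall s, a <= s -> L <= g s -> dg s <= - eta) -> ev (fun s => g s < L).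
Proof.
  intros HD He Hb.
  destruct (classic (exists s0, a <= s0 /\ g s0 < L)) as [[s0 [Hs0 Hg0]]|Hn].
  - exists s0. intros s Hs. apply (barrier g dg s0 L); auto.
    + intros; apply HD; lra.
    + intros t Ht Heq. assert (dg t <= - eta) by (apply Hb; lra). lra.
  - exfalso.
    assert (Hall : forall s, a <= s -> L <= g s).
    { intros s Hs. destruct (Rle_or_lt L (g s)); auto. exfalso; apply Hn; eauto. }
    set (T := (g a - L) / eta + 1).
    assert (HT : 1 <= T). { unfold T. assert (0 <= (g a - L)/eta); [|lra].
      apply Rdiv_le_0_compat; [|lra]. specialize (Hall a (Rle_refl a)); lra. }
    assert (H := mvt_ub g dg a a (a + T) (- eta) HD (Rle_refl a) ltac:(lra)).
    assert (H1 : g (a + T) - g a <= - eta * (a + T - a)).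
    { apply H. intros t Ht. apply Hb; [lra|]. apply Hall; lra. }
    specialize (Hall (a + T) ltac:(lra)).
    assert (HT2 : eta * T = g a - L + eta) by (unfold T; field; lra).
    replace (- eta * (a + T - a)) with (- (eta * T)) in H1 by ring. lra.
Qed.

Lemma ev_above (g dg : R -> R) a L eta :
  (forall s, a <= s -> is_derive g s (dg s)) -> 0 < eta ->
  (forall s, a <= s -> g s <= L -> eta <= dg s) -> ev (fun s => L < g s).
Proof.
  intros HD He Hb.
  assert (H := ev_below (fun s => - g s) (fun s => - dg s) a (- L) eta).
  destruct H as [M HM]; auto.
  - intros s Hs. apply (is_derive_opp g s (dg s)). auto.
  - intros s Hs HL. assert (eta <= dg s) by (apply Hb; lra). lra.
  - exists M. intros s Hs. specialize (HM s Hs). simpl in HM. lra.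
Qed.

Lemma relax (g dg p r : R -> R) l a :
  (forall s, a <= s -> is_derive g s (dg s)) ->
  (forall s, a <= s -> dg s = - p s * (g s - l) + r s) ->
  tinf p -> (exists D, ev (fun s => Rabs (r s) <= D)) -> tends g l.
Proof.
  intros HD Heq Hp [D HD2] eps Heps.
  destruct (ev_and _ _ HD2 (Hp ((Rabs D + 1) / eps + 1))) as [M HM].
  set (a' := Rmax a M).
  assert (Ha1 : a <= a') by apply Rmax_l. assert (Ha2 : M <= a') by apply Rmax_r.
  assert (HD' : forall s, a' <= s -> is_derive g s (dg s)) by (intros; apply HD; lra).
  assert (Hq : forall s, a' <= s -> Rabs D + 1 <= p s * eps /\ 0 <= p s /\ Rabs (r s) <= D).
  { intros s Hs. destruct (HM s ltac:(lra)) as [H1 H2].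
    assert (0 <= (Rabs D + 1) / eps) by (apply Rdiv_le_0_compat; [generalize (Rabs_pos D)|]; lra).
    split; [|split; [lra|auto]].
    apply (Rmult_le_reg_r (/ eps)). { apply Rinv_0_lt_compat; lra. }
    rewrite Rmult_assoc, Rinv_r by lra. unfold Rdiv in *. lra. }
  assert (E1 : ev (fun s => g s < l + eps)).
  { apply (ev_below g dg a' (l + eps) 1 HD' ltac:(lra)).
    intros s Hs Hg. destruct (Hq s Hs) as [H1 [H2 H3]]. rewrite (Heq s ltac:(lra)).
    generalize (Rle_abs (r s)) (Rle_abs D); intros.
    assert (0 <= p s * (g s - l - eps)) by (apply Rmult_le_pos; lra). nra. }
  assert (E2 : ev (fun s => l - eps < g s)).
  { apply (ev_above g dg a' (l - eps) 1 HD' ltac:(lra)).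
    intros s Hs Hg. destruct (Hq s Hs) as [H1 [H2 H3]]. rewrite (Heq s ltac:(lra)).
    generalize (Rle_abs (- r s)) (Rle_abs D); rewrite Rabs_Ropp; intros.
    assert (0 <= p s * (l - eps - g s)) by (apply Rmult_le_pos; lra). assert (- p s * (g s - l) = p s * (l - eps - g s) + p s * eps) by ring. lra. }
  destruct (ev_and _ _ E1 E2) as [M' HM'].
  exists M'. intros s Hs. destruct (HM' s Hs). apply Rabs_def1; lra.
Qed.

Lemma tends_lim f (l : R) : tends f l -> is_lim f p_infty l.
Proof.
  intros H P HP. simpl in HP. destruct HP as [eps HP]. destruct (H eps (cond_pos eps)) as [M HM].
  exists M. intros x Hx. apply HP. apply HM. lra.
Qed.

Lemma lim_tends f (l : R) : is_lim f p_infty l -> tends f l.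
Proof.
  intros H eps Heps. destruct (H (fun y => Rabs (y - l) < eps)) as [M HM].
  { apply (locally_ball l (mkposreal eps Heps)). }
  exists (M + 1). intros s Hs. apply HM. lra.
Qed.

Lemma tinf_lim f : tinf f -> is_lim f p_infty p_infty.
Proof.
  intros H P HP. simpl in HP. destruct HP as [B HP]. destruct (H (B + 1)) as [M HM].
  exists M. intros x Hx. apply HP. specialize (HM x ltac:(lra)). lra.
Qed.

Lemma lim_tinf f : is_lim f p_infty p_infty -> tinf f.
Proof.
  intros H B. assert (H1 := H (fun y => B < y)). destruct H1 as [M HM].
  { exists B. auto. }
  exists (M + 1). intros s Hs. left. apply HM. lra.
Qed.

Lemma ratio_lemma (g dg : R -> R) a L :
  (forall s, a <= s -> is_derive g s (dg s)) -> tends dg L -> tends (fun s => g s / s) L.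
Proof.
  intros HD Hd eps Heps.
  destruct (Hd (eps / 2) ltac:(lra)) as [M HM].
  set (s1 := Rmax 1 (Rmax a M)).
  assert (H1 : 1 <= s1) by apply Rmax_l.
  assert (H2 : a <= s1) by (eapply Rle_trans; [apply Rmax_l|apply Rmax_r]).
  assert (H3 : M <= s1) by (eapply Rle_trans; [apply Rmax_r|apply Rmax_r]).
  set (C := Rabs (g s1 - L * s1)).
  exists (Rmax s1 (2 * C / eps + 1)). intros s Hs.
  assert (Hs1 : s1 <= s) by (eapply Rle_trans; [apply Rmax_l|apply Hs]).
  assert (Hs2 : 2 * C / eps + 1 <= s) by (eapply Rle_trans; [apply Rmax_r|apply Hs]).
  assert (Hu := mvt_ub g dg a s1 s (L + eps/2) HD H2 Hs1).
  assert (Hl := mvt_lb g dg a s1 s (L - eps/2) HD H2 Hs1).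
  assert (Hb : forall t, s1 <= t <= s -> Rabs (dg t - L) < eps / 2) by (intros; apply HM; lra).
  assert (U : g s - g s1 <= (L + eps / 2) * (s - s1)).
  { apply Hu. intros t Ht. specialize (Hb t Ht). apply Rabs_def2 in Hb. lra. }
  assert (V : (L - eps / 2) * (s - s1) <= g s - g s1).
  { apply Hl. intros t Ht. specialize (Hb t Ht). apply Rabs_def2 in Hb. lra. }
  assert (HC : 0 <= C) by apply Rabs_pos.
  assert (HC2 : 2 * C < eps * s).
  { assert (2 * C / eps < s) by lra.
    assert (2 * C = eps * (2 * C / eps)) by (field; lra).
    rewrite H0. apply Rmult_lt_compat_l; lra. }
  assert (HCa : - C <= g s1 - L * s1 <= C).
  { unfold C. split; [generalize (Rle_abs (-(g s1 - L * s1))); rewrite Rabs_Ropp|apply Rle_abs]; lra. }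
  replace (g s / s - L) with ((g s - L * s) / s) by (field; lra).
  rewrite Rabs_div by lra. rewrite (Rabs_right s) by lra.
  apply (Rmult_lt_reg_r s); [lra|]. unfold Rdiv. rewrite Rmult_assoc, Rinv_l, Rmult_1_r by lra.
  apply Rabs_def1.
  - assert (eps / 2 * (s - s1) <= eps / 2 * s) by (apply Rmult_le_compat_l; lra). nra.
  - assert (eps / 2 * (s - s1) <= eps / 2 * s) by (apply Rmult_le_compat_l; lra). nra.
Qed.

Lemma dec_lim f a B :
  (forall x y, a <= x -> x <= y -> f y <= f x) -> (forall x, a <= x -> B <= f x) ->
  exists K, tends f K.
Proof.
  intros Hdec Hb.
  set (E := fun z => exists x, a <= x /\ z = - f x).
  assert (HE : bound E). { exists (- B). intros z [x [Hx ->]]. specialize (Hb x Hx). lra. }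
  assert (Hne : exists z, E z). { exists (- f a). exists a. split; [lra|auto]. }
  destruct (completeness E HE Hne) as [K' [Hub Hlub]].
  exists (- K'). intros eps Heps.
  destruct (classic (exists x, a <= x /\ K' - eps < - f x)) as [[x [Hx Hfx]]|Hn].
  - exists x. intros s Hs.
    assert (- f s <= K') by (apply Hub; exists s; split; [lra|auto]).
    assert (f s <= f x) by (apply Hdec; lra).
    apply Rabs_def1; lra.
  - exfalso. assert (K' <= K' - eps); [|lra]. apply Hlub.
    intros z [x [Hx ->]]. destruct (Rle_or_lt (- f x) (K' - eps)); auto.
    exfalso; apply Hn; eauto.
Qed.

Lemma sT_lemma (T dT : R -> R) a :
  (forall s, a <= s -> is_derive T s (dT s)) -> tends T 0 ->
  tends (fun s => s ^ 2 * dT s) 0 -> tends (fun s => s * T s) 0.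
Proof.
  intros HD HT Hd eps Heps.
  destruct (Hd (eps / 2) ltac:(lra)) as [M HM].
  set (s1 := Rmax 1 (Rmax a M)).
  assert (H1 : 1 <= s1) by apply Rmax_l.
  assert (H2 : a <= s1) by (eapply Rle_trans; [apply Rmax_l|apply Rmax_r]).
  assert (H3 : M <= s1) by (eapply Rle_trans; [apply Rmax_r|apply Rmax_r]).
  exists s1. intros s Hs.
  assert (Hb : forall t, s <= t -> Rabs (dT t) * t ^ 2 < eps / 2).
  { intros t Ht. specialize (HM t ltac:(lra)). rewrite Rminus_0_r, Rabs_mult, Rmult_comm in HM.
    rewrite (Rabs_right (t ^ 2)) in HM by (apply Rle_ge, pow2_ge_0). lra. }
  assert (Hd1 : forall t, s <= t -> is_derive (fun x => T x - eps / 2 / x) t (dT t + eps / 2 / t ^ 2)).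
  { intros t Ht. auto_derive. { split; [exists (dT t); apply HD; lra|]. split; [lra|auto]. }
    change (Derive (fun x => T x)) with (Derive T).
    rewrite (is_derive_unique T t (dT t)) by (apply HD; lra). field. lra. }
  assert (Hd2 : forall t, s <= t -> is_derive (fun x => T x + eps / 2 / x) t (dT t - eps / 2 / t ^ 2)).
  { intros t Ht. auto_derive. { split; [exists (dT t); apply HD; lra|]. split; [lra|auto]. }
    change (Derive (fun x => T x)) with (Derive T).
    rewrite (is_derive_unique T t (dT t)) by (apply HD; lra). field. lra. }
  assert (Hbd : forall t, s <= t -> - (eps / 2 / t ^ 2) < dT t < eps / 2 / t ^ 2).
  { intros t Ht. specialize (Hb t Ht). assert (0 < t ^ 2) by (apply pow_lt; lra).
    assert (Rabs (dT t) < eps / 2 / t ^ 2).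
    { apply (Rmult_lt_reg_r (t ^ 2)); auto. unfold Rdiv. rewrite Rmult_assoc, Rinv_l; lra. }
    apply Rabs_def2 in H0. lra. }
  (* upper: phi = T - e/x increasing, tends to 0 *)
  assert (U : T s - eps / 2 / s <= 0).
  { destruct (Rle_or_lt (T s - eps / 2 / s) 0) as [h|h]; auto. exfalso.
    set (d := T s - eps / 2 / s).
    destruct (HT (d / 2) ltac:(unfold d; lra)) as [M2 HM2].
    set (t := Rmax (Rmax s M2) (2 * eps / d + 1)).
    assert (Ht1 : s <= t) by (unfold t; eapply Rle_trans; [apply Rmax_l|apply Rmax_l]).
    assert (Ht2 : M2 <= t) by (unfold t; eapply Rle_trans; [apply Rmax_r|apply Rmax_l]).
    assert (Ht3 : 2 * eps / d + 1 <= t) by (unfold t; apply Rmax_r).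
    assert (Hm := mvt_lb (fun x => T x - eps / 2 / x) (fun x => dT x + eps / 2 / x ^ 2) s s t 0).
    assert (Hm' : 0 * (t - s) <= T t - eps / 2 / t - (T s - eps / 2 / s)).
    { apply Hm. - intros; apply Hd1; lra. - lra. - lra. - intros x Hx; specialize (Hbd x ltac:(lra)); lra. }
    specialize (HM2 t Ht2). rewrite Rminus_0_r in HM2. apply Rabs_def2 in HM2.
    assert (0 < eps / 2 / t) by (apply Rdiv_lt_0_compat; lra).
    unfold d in *. lra. }
  assert (L : 0 <= T s + eps / 2 / s).
  { destruct (Rle_or_lt 0 (T s + eps / 2 / s)) as [h|h]; auto. exfalso.
    set (d := - (T s + eps / 2 / s)).
    destruct (HT (d / 2) ltac:(unfold d; lra)) as [M2 HM2].
    set (t := Rmax s M2).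
    assert (Ht1 : s <= t) by (unfold t; apply Rmax_l).
    assert (Ht2 : M2 <= t) by (unfold t; apply Rmax_r).
    assert (Hm := mvt_ub (fun x => T x + eps / 2 / x) (fun x => dT x - eps / 2 / x ^ 2) s s t 0).
    assert (Hm' : T t + eps / 2 / t - (T s + eps / 2 / s) <= 0 * (t - s)).
    { apply Hm. - intros; apply Hd2; lra. - lra. - lra. - intros x Hx; specialize (Hbd x ltac:(lra)); lra. }
    specialize (HM2 t Ht2). rewrite Rminus_0_r in HM2. apply Rabs_def2 in HM2.
    assert (0 < eps / 2 / t) by (apply Rdiv_lt_0_compat; lra).
    unfold d in *. lra. }
  rewrite Rminus_0_r. 
  assert (E : eps / 2 / s * s = eps / 2) by (field; lra).
  apply Rabs_def1; nra.
Qed.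

Lemma isd_mult (f g : R -> R) (x df dg : R) : is_derive f x df -> is_derive g x dg ->
  is_derive (fun t => f t * g t) x (df * g x + f x * dg).
Proof.
  intros H1 H2. auto_derive. { repeat split; try (exists df; exact H1); try (exists dg; exact H2). }
  change (Derive (fun x => f x)) with (Derive f). change (Derive (fun x => g x)) with (Derive g).
  rewrite (is_derive_unique _ _ _ H1), (is_derive_unique _ _ _ H2). ring.
Qed.

Lemma isd_minc (f : R -> R) (x df c : R) : is_derive f x df -> is_derive (fun t => f t - c) x df.
Proof.
  intros H1. auto_derive. { exists df; auto. }
  change (Derive (fun x => f x)) with (Derive f).
  rewrite (is_derive_unique _ _ _ H1). ring.
Qed.

Lemma tends_bnd f l : tends f l -> exists D, ev (fun s => Rabs (f s) <= D).
Proof.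
  intros H. exists (Rabs l + 1). destruct (H 1 ltac:(lra)) as [M HM]. exists M.
  intros s Hs. specialize (HM s Hs).
  replace (f s) with ((f s - l) + l) by ring.
  eapply Rle_trans; [apply Rabs_triang|]. lra.
Qed.

Lemma tends_plus f g a b : tends f a -> tends g b -> tends (fun s => f s + g s) (a + b).
Proof. intros. apply lim_tends. apply is_lim_plus'; apply tends_lim; auto. Qed.

Lemma tends_minus f g a b : tends f a -> tends g b -> tends (fun s => f s - g s) (a - b).
Proof. intros. apply lim_tends. apply is_lim_minus'; apply tends_lim; auto. Qed.

Lemma tends_mult f g a b : tends f a -> tends g b -> tends (fun s => f s * g s) (a * b).
Proof.
  intros. apply lim_tends.
  apply (is_lim_mult f g p_infty a b); try apply tends_lim; auto. simpl; auto.
Qed.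

Lemma tends_const c : tends (fun _ => c) c.
Proof. intros eps He. exists 0. intros. rewrite Rminus_diag, Rabs_R0. auto. Qed.

Lemma tends_ext f g l : ev (fun s => f s = g s) -> tends f l -> tends g l.
Proof.
  intros [M HM] H eps He. destruct (H eps He) as [M2 HM2].
  exists (Rmax M M2). intros s Hs. rewrite <- HM. apply HM2.
  eapply Rle_trans; [apply Rmax_r|eauto]. eapply Rle_trans; [apply Rmax_l|eauto].
Qed.

Lemma tends_inv f a : tends f a -> a <> 0 -> tends (fun s => / f s) (/ a).
Proof.
  intros H Ha. apply lim_tends.
  apply (is_lim_inv f p_infty (Finite a)); [apply tends_lim; auto|]. intro h; injection h; auto.
Qed.

Lemma tends_invs : tends (fun s => / s) 0.
Proof.
  intros eps He. exists (2 / eps). intros s Hs.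
  assert (0 < 2 / eps) by (apply Rdiv_lt_0_compat; lra).
  rewrite Rminus_0_r, Rabs_right by (left; apply Rinv_0_lt_compat; lra).
  apply (Rmult_lt_reg_r s); [lra|]. rewrite Rinv_l by lra.
  assert (eps * (2 / eps) = 2) by (field; lra). nra.
Qed.

Lemma tends_lns : tends (fun s => ln s / s) 0.
Proof. apply lim_tends. apply is_lim_div_ln_p. Qed.

Lemma tends_ln2s : tends (fun s => ln s * ln s / s) 0.
Proof.
  assert (H : is_lim (fun s => ln (sqrt s) / sqrt s) p_infty 0).
  { assert (H0 := is_lim_comp (fun y => ln y / y) sqrt p_infty 0 p_infty).
    cbv beta in H0. apply H0.
    - apply is_lim_div_ln_p.
    - apply (is_lim_sqrt_p (fun y => y)). apply is_lim_id.
    - exists 0. intros x Hx. discriminate. }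
  apply lim_tends in H.
  assert (H2 := tends_mult _ _ _ _ H H).
  assert (H3 := tends_mult _ _ _ _ (tends_const 4) H2).
  rewrite !Rmult_0_r in H3.
  refine (tends_ext _ _ 0 _ H3). exists 1. intros s Hs. cbv beta.
  assert (Hq : 0 < sqrt s) by (apply sqrt_lt_R0; lra).
  assert (Hl : ln s = 2 * ln (sqrt s)).
  { rewrite <- (sqrt_sqrt s) at 1 by lra. rewrite ln_mult by auto. ring. }
  rewrite Hl. assert (Hs2 : s = sqrt s * sqrt s) by (rewrite sqrt_sqrt; lra).
  set (q := sqrt s) in *. rewrite Hs2. field. lra.
Qed.

Definition bnd (f : R -> R) := exists D, ev (fun s => Rabs (f s) <= D).

Lemma bnd_mult f g : bnd f -> bnd g -> bnd (fun s => f s * g s).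
Proof.
  intros [D1 H1] [D2 H2]. exists (D1 * D2). destruct (ev_and _ _ H1 H2) as [M HM].
  exists M. intros s Hs. destruct (HM s Hs). rewrite Rabs_mult.
  apply Rmult_le_compat; auto; apply Rabs_pos.
Qed.

Lemma bnd_plus f g : bnd f -> bnd g -> bnd (fun s => f s + g s).
Proof.
  intros [D1 H1] [D2 H2]. exists (D1 + D2). destruct (ev_and _ _ H1 H2) as [M HM].
  exists M. intros s Hs. destruct (HM s Hs).
  eapply Rle_trans; [apply Rabs_triang|]. lra.
Qed.

Lemma bnd_tends f l : tends f l -> bnd f.
Proof. apply tends_bnd. Qed.

Lemma bnd_const c : bnd (fun _ => c).
Proof. exists (Rabs c). exists 0. intros; lra. Qed.

Lemma bnd_ext f g : ev (fun s => f s = g s) -> bnd f -> bnd g.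
Proof.
  intros [M HM] [D [M2 HM2]]. exists D. exists (Rmax M M2). intros s Hs. rewrite <- HM. apply HM2.
  eapply Rle_trans; [apply Rmax_r|eauto]. eapply Rle_trans; [apply Rmax_l|eauto].
Qed.

Lemma abs_leb x y : Rabs x <= y -> - y <= x <= y.
Proof. intros H. generalize (Rle_abs x) (Rle_abs (- x)). rewrite Rabs_Ropp. lra. Qed.

Definition sysH (k b al ga : R) (W Z : R -> R) : Prop :=
  0 < k /\ 0 < b /\ 0 < al /\
  (forall s, is_derive W s (W s * Z s / k)) /\
  (forall s, is_derive Z s (al + ga * Z s - Z s ^ 2 - b * W s * Z s)) /\
  (forall s, 0 < W s).

Lemma Zpos k b al ga W Z s0 : sysH k b al ga W Z -> 0 < Z s0 ->
  forall s, s0 <= s -> 0 < Z s.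
Proof.
  intros (Hk & Hb & Hal & HW & HZ & HWp) Hs0 s Hs.
  cut (- Z s < 0). lra.
  apply (barrier (fun t => - Z t) (fun t => - (al + ga * Z t - Z t ^ 2 - b * W t * Z t)) s0 0); auto.
  - intros t _. apply (is_derive_opp Z t). auto.
  - lra.
  - intros t _ Ht. assert (Z t = 0) by lra. rewrite H. lra.
Qed.

Lemma Zbnd k b al ga W Z s0 : sysH k b al ga W Z -> 0 < Z s0 ->
  exists Zm, 0 < Zm /\ forall s, s0 <= s -> 0 < Z s < Zm.
Proof.
  intros HH Hs0. assert (Hp := Zpos _ _ _ _ _ _ _ HH Hs0).
  destruct HH as (Hk & Hb & Hal & HW & HZ & HWp).
  set (L := Rmax (Z s0 + 1) (Rabs ga + al + 1)).
  assert (HL1 : Z s0 + 1 <= L) by apply Rmax_l.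
  assert (HL2 : Rabs ga + al + 1 <= L) by apply Rmax_r.
  exists L. split. { generalize (Rabs_pos ga). lra. }
  intros s Hs. split; [auto|].
  apply (barrier Z (fun t => al + ga * Z t - Z t ^ 2 - b * W t * Z t) s0 L); auto.
  - lra.
  - intros t Ht HZt. rewrite HZt.
    assert (0 <= b * W t * L). { apply Rmult_le_pos; [apply Rmult_le_pos|]; try lra. left; auto. }
    assert (ga * L <= Rabs ga * L). { apply Rmult_le_compat_r. generalize (Rabs_pos ga); lra. apply Rle_abs. }
    assert (Rabs ga * L - L ^ 2 <= - (al + 1) * L) by nra.
    nra.
Qed.

Lemma W_inf k b al ga W Z s0 : sysH k b al ga W Z -> 0 < Z s0 -> tinf W.
Proof.
  intros HH Hs0. assert (Hp := Zpos _ _ _ _ _ _ _ HH Hs0).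
  destruct HH as (Hk & Hb & Hal & HW & HZ & HWp).
  assert (Hinc : forall x y, s0 <= x -> x <= y -> W x <= W y).
  { intros x y Hx Hxy.
    assert (H := mvt_lb W (fun t => W t * Z t / k) s0 x y 0 (fun s _ => HW s) Hx Hxy).
    cut (0 * (y - x) <= W y - W x). lra.
    apply H. intros t Ht. apply Rdiv_le_0_compat; [|lra]. apply Rmult_le_pos; left; [auto|apply Hp; lra]. }
  intros B. apply NNPP. intros Hn.
  assert (HB : forall s, s0 <= s -> W s < B).
  { intros s Hs. destruct (Rlt_or_le (W s) B) as [h|h]; auto. exfalso. apply Hn.
    exists s. intros t Ht. eapply Rle_trans; [apply h|]. apply Hinc; lra. }
  assert (HB0 : 0 < B) by (specialize (HB s0 (Rle_refl _)); specialize (HWp s0); lra).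
  set (C := Rabs ga + 1 + b * B).
  assert (HC : 0 < C) by (unfold C; generalize (Rabs_pos ga); nra).
  set (del := Rmin 1 (al / (2 * C))).
  assert (Hd1 : del <= 1) by apply Rmin_l.
  assert (Hd2 : del <= al / (2 * C)) by apply Rmin_r.
  assert (Hd0 : 0 < del) by (unfold del; apply Rmin_case; [lra|apply Rdiv_lt_0_compat; lra]).
  assert (HdC : del * C <= al / 2).
  { assert (al / (2 * C) * C = al / 2) by (field; lra). nra. }
  destruct (ev_above Z (fun t => al + ga * Z t - Z t ^ 2 - b * W t * Z t) s0 del (al / 2)
              (fun s _ => HZ s) ltac:(lra)) as [M HM].
  { intros s Hs Hz. assert (Hzp := Hp s Hs). assert (HWs := HB s Hs). specialize (HWp s).
    assert (ga * Z s >= - Rabs ga * del).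
    { assert (- (ga * Z s) <= Rabs ga * del); [|lra].
      eapply Rle_trans; [apply Rle_abs|]. rewrite Rabs_Ropp, Rabs_mult, (Rabs_right (Z s)) by lra.
      apply Rmult_le_compat_l; [apply Rabs_pos|lra]. }
    assert (Z s ^ 2 <= del) by nra.
    assert (b * W s * Z s <= b * B * del).
    { assert (0 <= b * W s) by nra. assert (b * W s <= b * B) by nra. nra. }
    unfold C in HdC. nra. }
  set (s2 := Rmax s0 M).
  assert (Hs2a : s0 <= s2) by apply Rmax_l. assert (Hs2b : M <= s2) by apply Rmax_r.
  set (c := W s2 * del / k).
  assert (Hc : 0 < c) by (unfold c; specialize (HWp s2); apply Rdiv_lt_0_compat; nra).
  set (t := s2 + B / c + 1).
  assert (Ht : s2 <= t) by (unfold t; assert (0 < B / c) by (apply Rdiv_lt_0_compat; lra); lra).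
  assert (H := mvt_lb W (fun t => W t * Z t / k) s0 s2 t c (fun s _ => HW s) Hs2a Ht).
  assert (H1 : c * (t - s2) <= W t - W s2).
  { apply H. intros x Hx. unfold c. unfold Rdiv. apply Rmult_le_compat_r. left; apply Rinv_0_lt_compat; lra.
    assert (W s2 <= W x) by (apply Hinc; lra). assert (del < Z x) by (apply HM; lra).
    specialize (HWp s2). nra. }
  assert (c * (t - s2) = B + c) by (unfold t; field; lra).
  specialize (HB t ltac:(lra)). specialize (HWp s2). lra.
Qed.

Lemma tinf_lin W b c : 0 < b -> tinf W -> forall f : R -> R, ev (fun s => b * W s - c <= f s) -> tinf f.
Proof.
  intros Hb HW f Hf B. destruct (ev_and _ _ Hf (HW ((B + c) / b))) as [M HM].
  exists M. intros s Hs. destruct (HM s Hs) as [h1 h2].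
  assert (b * ((B + c) / b) = B + c) by (field; lra). nra.
Qed.

Lemma sys_limits k b al ga W Z s0 : sysH k b al ga W Z -> 0 < Z s0 ->
  let cc := 1 / k - 1 in
  let e1 := ga * al / b ^ 2 in
  let e2 := (ga ^ 2 * al + cc * al ^ 2) / b ^ 3 in
  tinf W /\
  tends (fun s => W s * Z s) (al / b) /\
  tends (fun s => W s * (W s * Z s - al / b)) e1 /\
  tends (fun s => W s * (W s * (W s * Z s - al / b) - e1)) e2.
Proof.
  intros HH Hs0 cc e1 e2.
  assert (HWi := W_inf _ _ _ _ _ _ _ HH Hs0).
  destruct (Zbnd _ _ _ _ _ _ _ HH Hs0) as [Zm [HZm HZb]].
  destruct HH as (Hk & Hb & Hal & HW & HZ & HWp).
  set (Y := fun s => W s * Z s).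
  set (dY := fun s => W s * Z s / k * Z s + W s * (al + ga * Z s - Z s ^ 2 - b * W s * Z s)).
  assert (HY : forall s, is_derive Y s (dY s)) by (intros; apply isd_mult; auto).
  assert (TY : tends Y (al / b)).
  { apply (relax Y dY (fun s => b * W s - ga - cc * Z s) (fun s => (ga + cc * Z s) * al / b) (al / b) s0).
    - intros; auto.
    - intros s _. unfold dY, Y, cc. cbv beta. field. split; lra.
    - apply (tinf_lin W b (Rabs ga + Rabs cc * Zm)); auto. exists s0. intros s Hs.
      destruct (HZb s Hs). generalize (Rle_abs ga) (Rle_abs cc) (Rabs_pos cc). intros. nra.
    - exists ((Rabs ga + Rabs cc * Zm) * al / b). exists s0. intros s Hs. destruct (HZb s Hs).
      unfold Rdiv. rewrite !Rabs_mult. rewrite (Rabs_right al), (Rabs_right (/ b)) by (left; try apply Rinv_0_lt_compat; lra).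
      apply Rmult_le_compat_r. left; apply Rinv_0_lt_compat; lra.
      apply Rmult_le_compat_r. lra.
      eapply Rle_trans; [apply Rabs_triang|]. rewrite Rabs_mult, (Rabs_right (Z s)) by lra.
      generalize (Rabs_pos cc); intro. nra. }
  set (P := fun s => W s * (Y s - al / b)).
  set (dP := fun s => W s * Z s / k * (Y s - al / b) + W s * dY s).
  assert (HP : forall s, is_derive P s (dP s)).
  { intros. apply (isd_mult W (fun t => Y t - al / b)); auto. apply (isd_minc Y s (dY s) (al / b)). auto. }
  assert (TP : tends P e1).
  { apply (relax P dP (fun s => b * W s - ga) (fun s => ga * e1 + cc * (Y s * Y s) + Y s * (Y s - al / b) * / k) e1 s0).
    - intros; auto.
    - intros s _. unfold dP, dY, P, Y, cc, e1. cbv beta. field. split; lra.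
    - apply (tinf_lin W b ga); auto. exists s0. intros; lra.
    - eapply tends_bnd. eapply tends_plus; [eapply tends_plus|].
      + apply tends_const.
      + eapply tends_mult; [apply tends_const|]. eapply tends_mult; eauto.
      + eapply tends_mult; [eapply tends_mult|apply tends_const]; [eauto|]. eapply tends_minus; [eauto|apply tends_const]. }
  set (G := fun s => W s * (P s - e1)).
  set (dG := fun s => W s * Z s / k * (P s - e1) + W s * dP s).
  assert (HG : forall s, is_derive G s (dG s)).
  { intros. apply (isd_mult W (fun t => P t - e1)); auto. apply (isd_minc P s (dP s) e1). auto. }
  assert (TG : tends G e2).
  { apply (relax G dG (fun s => b * W s - ga)
       (fun s => ga * e2 + Y s * / k * (P s - e1) + cc * P s * (Y s + al / b) + Y s * P s * / k) e2 s0).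
    - intros; auto.
    - intros s _. unfold dG, dP, dY, G, P, Y, e2, cc, e1. cbv beta. field. split; lra.
    - apply (tinf_lin W b ga); auto. exists s0. intros; lra.
    - eapply tends_bnd. eapply tends_plus; [eapply tends_plus; [eapply tends_plus|]|].
      + apply tends_const.
      + eapply tends_mult; [eapply tends_mult; [eauto|apply tends_const]|]. eapply tends_minus; [eauto|apply tends_const].
      + eapply tends_mult; [eapply tends_mult; [apply tends_const|eauto]|]. eapply tends_plus; [eauto|apply tends_const].
      + eapply tends_mult; [eapply tends_mult|apply tends_const]; eauto. }
  repeat split; auto.
Qed.

Lemma final_abstract k b al ga W Z s0 : sysH k b al ga W Z -> 0 < Z s0 ->
  let c1 := al / (b * k) in
  let c2 := - ga / b in
  let c3 := c2 ^ 2 / c1 in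
  let cc := 1 / k - 1 in
  let e2 := (ga ^ 2 * al + cc * al ^ 2) / b ^ 3 in
  let h1 := fun s => W s - c1 * s + c2 * ln s in
  (exists K, tends h1 K) /\
  (forall K, tends h1 K ->
     tends (fun s => s * (h1 s - K - c3 * ((1 + ln s) / s)) + (c2 / c1 * K + e2 / (k * c1 ^ 2))) 0).
Proof.
  intros HH Hs0 c1 c2 c3 cc e2 h1.
  destruct (sys_limits _ _ _ _ _ _ _ HH Hs0) as [TW [TY [TP TG]]].
  set (e1 := ga * al / b ^ 2) in *.
  destruct HH as (Hk & Hb & Hal & HW & HZ & HWp).
  assert (Hc1 : 0 < c1) by (unfold c1; apply Rdiv_lt_0_compat; nra).
  assert (R1 : tends (fun s => W s / s) c1).
  { apply (ratio_lemma W (fun s => W s * Z s / k) 0); [intros; apply HW|].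
    replace c1 with (al / b * / k) by (unfold c1; field; lra).
    apply (tends_mult (fun s => W s * Z s) (fun _ => / k)); auto. apply tends_const. }
  assert (R2 : tends (fun s => s / W s) (/ c1)).
  { apply (tends_ext (fun s => / (W s / s))). { exists 1. intros s Hs. specialize (HWp s). field; lra. }
    apply tends_inv; auto. lra. }
  set (G := fun s => W s * (W s * (W s * Z s - al / b) - e1)) in *.
  set (dh := fun s => W s * Z s / k - c1 + c2 / s).
  assert (Hh1 : forall s, 1 <= s -> is_derive h1 s (dh s)).
  { intros s Hs. unfold h1. auto_derive. { repeat split; [exists (W s * Z s / k); apply HW|lra]. }
    change (Derive (fun x => W x)) with (Derive W). rewrite (is_derive_unique _ _ _ (HW s)).
    unfold dh. field. split; lra. }
  assert (Id1 : forall s, 1 <= s -> s ^ 2 * dh s = c2 * (W s - c1 * s) * (s / W s) + (s / W s) ^ 2 * G s / k).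
  { intros s Hs. specialize (HWp s). unfold dh, G, c1, c2, e1. field. repeat split; lra. }
  split.
  -
    assert (sH : bnd (fun s => s * (W s * Z s / k - c1))).
    { apply (bnd_ext (fun s => s / W s * (W s * (W s * Z s - al / b)) * / k)).
      { exists 1. intros s Hs. specialize (HWp s). unfold c1. field. repeat split; lra. }
      apply (bnd_tends _ (/ c1 * e1 * / k)). apply tends_mult; [apply tends_mult|apply tends_const]; auto. }
    destruct sH as [A [MA HA]].
    set (s1 := Rmax 1 MA).
    assert (Hs1a : 1 <= s1) by apply Rmax_l. assert (Hs1b : MA <= s1) by apply Rmax_r.
    set (H := fun s => W s - c1 * s).
    assert (HdH : forall s, 1 <= s -> is_derive H s (W s * Z s / k - c1)).
    { intros s Hs. unfold H. auto_derive. { exists (W s * Z s / k); apply HW. }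
      change (Derive (fun x => W x)) with (Derive W). rewrite (is_derive_unique _ _ _ (HW s)). ring. }
    assert (HH' : forall s, s1 <= s -> Rabs (W s * Z s / k - c1) <= A / s).
    { intros s Hs. specialize (HA s ltac:(lra)). rewrite Rabs_mult, (Rabs_right s) in HA by lra.
      apply (Rmult_le_reg_l s); [lra|]. replace (s * (A / s)) with A by (field; lra). auto. }
    assert (HA0 : 0 <= A). { specialize (HA s1 Hs1b). generalize (Rabs_pos (s1 * (W s1 * Z s1 / k - c1))). lra. }
    assert (Hbd : forall s, s1 <= s -> Rabs (H s) <= Rabs (H s1) + A * ln s).
    { intros s Hs.
      assert (Hln1 : 0 <= ln s1) by (rewrite <- ln_1; apply ln_le; lra).
      assert (U : H s - A * ln s <= H s1 - A * ln s1).
      { apply (mono_le (fun t => H t - A * ln t) (fun t => W t * Z t / k - c1 - A / t) 1 s1 s); auto.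
        - intros t Ht. auto_derive. { repeat split; [exists (W t * Z t / k - c1); apply HdH; lra|lra]. }
          change (Derive (fun x => H x)) with (Derive H). rewrite (is_derive_unique _ _ _ (HdH t Ht)). field. lra.
        - intros t Ht. specialize (HH' t ltac:(lra)). apply abs_leb in HH'. lra. }
      assert (L : H s1 + A * ln s1 <= H s + A * ln s).
      { cut (0 * (s - s1) <= H s + A * ln s - (H s1 + A * ln s1)). lra.
        apply (mvt_lb (fun t => H t + A * ln t) (fun t => W t * Z t / k - c1 + A / t) 1 s1 s 0); auto.
        - intros t Ht. auto_derive. { repeat split; [exists (W t * Z t / k - c1); apply HdH; lra|lra]. }
          change (Derive (fun x => H x)) with (Derive H). rewrite (is_derive_unique _ _ _ (HdH t Ht)). field. lra.
        - intros t Ht. specialize (HH' t ltac:(lra)). apply abs_leb in HH'. lra. }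
      assert (A * ln s1 >= 0) by (apply Rle_ge, Rmult_le_pos; lra).
      generalize (Rle_abs (H s1)) (Rle_abs (- H s1)); rewrite Rabs_Ropp; intros.
      apply Rabs_le. lra. }
    assert (Q1 : bnd (fun s => H s / (1 + ln s))).
    { exists (Rabs (H s1) + A). exists s1. intros s Hs.
      assert (Hln : 0 <= ln s) by (rewrite <- ln_1; apply ln_le; lra).
      rewrite Rabs_div, (Rabs_right (1 + ln s)) by lra.
      apply (Rmult_le_reg_r (1 + ln s)); [lra|]. unfold Rdiv. rewrite Rmult_assoc, Rinv_l, Rmult_1_r by lra.
      specialize (Hbd s Hs). generalize (Rabs_pos (H s1)); intro. nra. }
    assert (Q2 : bnd (fun s => / (1 + ln s))).
    { exists 1. exists 1. intros s Hs.
      assert (Hln : 0 <= ln s) by (rewrite <- ln_1; apply ln_le; lra).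
      rewrite Rabs_right by (left; apply Rinv_0_lt_compat; lra).
      apply (Rmult_le_reg_r (1 + ln s)); [lra|]. rewrite Rinv_l by lra. lra. }
    assert (Q3 : bnd (fun s => s ^ 2 * dh s * / (1 + ln s))).
    { apply (bnd_ext (fun s => c2 * (H s / (1 + ln s)) * (s / W s) + (s / W s) * (s / W s) * G s * / k * / (1 + ln s))).
      { exists 1. intros s Hs. rewrite Id1 by lra.
        assert (Hln : 0 <= ln s) by (rewrite <- ln_1; apply ln_le; lra).
        specialize (HWp s). unfold H. field. repeat split; lra. }
      apply bnd_plus.
      - apply bnd_mult; [apply bnd_mult; [apply bnd_const|auto]|]. eapply bnd_tends; eauto.
      - apply bnd_mult; auto. apply bnd_mult; [|apply bnd_const]. apply bnd_mult; [apply bnd_mult|];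
        eapply bnd_tends; eauto. }
    destruct Q3 as [C [MC HC]].
    set (s3 := Rmax 1 MC).
    assert (Hs3a : 1 <= s3) by apply Rmax_l. assert (Hs3b : MC <= s3) by apply Rmax_r.
    assert (HC0 : 0 <= C). { specialize (HC s3 Hs3b). generalize (Rabs_pos (s3 ^ 2 * dh s3 * / (1 + ln s3))). lra. }
    assert (Hdh : forall s, s3 <= s -> Rabs (dh s) <= C * (1 + ln s) / s ^ 2).
    { intros s Hs. specialize (HC s ltac:(lra)).
      assert (Hln : 0 <= ln s) by (rewrite <- ln_1; apply ln_le; lra).
      assert (0 < s ^ 2) by (apply pow_lt; lra).
      rewrite !Rabs_mult, (Rabs_right (s ^ 2)), (Rabs_right (/ (1 + ln s))) in HC
        by (left; try apply Rinv_0_lt_compat; lra).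
      apply (Rmult_le_reg_r (s ^ 2 * / (1 + ln s))). { apply Rmult_lt_0_compat; [lra|apply Rinv_0_lt_compat; lra]. }
      replace (C * (1 + ln s) / s ^ 2 * (s ^ 2 * / (1 + ln s))) with C by (field; lra). lra. }
    set (psi := fun s => (2 + ln s) / s).
    assert (Hpsi : forall s, 1 <= s -> is_derive psi s (- ((1 + ln s) / s ^ 2))).
    { intros s Hs. unfold psi. auto_derive. { lra. } field. lra. }
    assert (Hdec : forall x y, s3 <= x -> x <= y -> h1 y + C * psi y <= h1 x + C * psi x).
    { intros x y Hx Hxy.
      apply (mono_le (fun t => h1 t + C * psi t) (fun t => dh t + C * (- ((1 + ln t) / t ^ 2))) s3 x y); auto.
      - intros t Ht. apply (is_derive_plus h1 (fun t => C * psi t)); [apply Hh1; lra|]. apply is_derive_scal. apply Hpsi; lra.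
      - intros t Ht. specialize (Hdh t ltac:(lra)). apply abs_leb in Hdh. lra. }
    assert (Hinc : forall x y, s3 <= x -> x <= y -> h1 x - C * psi x <= h1 y - C * psi y).
    { intros x y Hx Hxy.
      cut (0 * (y - x) <= h1 y - C * psi y - (h1 x - C * psi x)). lra.
      apply (mvt_lb (fun t => h1 t - C * psi t) (fun t => dh t - C * (- ((1 + ln t) / t ^ 2))) s3 x y 0); auto.
      - intros t Ht. apply (is_derive_minus h1 (fun t => C * psi t)); [apply Hh1; lra|]. apply is_derive_scal. apply Hpsi; lra.
      - intros t Ht. specialize (Hdh t ltac:(lra)). apply abs_leb in Hdh. lra. }
    assert (Hpsi0 : forall s, 1 <= s -> 0 <= psi s).
    { intros s Hs. unfold psi. apply Rdiv_le_0_compat; [|lra].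
      assert (0 <= ln s) by (rewrite <- ln_1; apply ln_le; lra). lra. }
    destruct (dec_lim (fun s => h1 s + C * psi s) s3 (h1 s3 - C * psi s3)) as [K HK].
    { intros; apply Hdec; auto. }
    { intros x Hx. specialize (Hinc s3 x ltac:(lra) Hx). specialize (Hpsi0 x ltac:(lra)). nra. }
    exists K.
    assert (Tpsi : tends psi 0).
    { apply (tends_ext (fun s => 2 * / s + ln s / s)). { exists 1. intros s Hs. unfold psi. field. lra. }
      replace 0 with (2 * 0 + 0) by ring. apply tends_plus; [apply tends_mult; [apply tends_const|apply tends_invs]|apply tends_lns]. }
    apply (tends_ext (fun s => (h1 s + C * psi s) - C * psi s)). { exists 0. intros; ring. }
    replace K with (K - C * 0) by ring. apply tends_minus; auto. apply tends_mult; [apply tends_const|auto].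
  - intros K HK.
    set (M := c2 / c1 * K + e2 / (k * c1 ^ 2)).
    set (T := fun s => h1 s - K - c3 * ((1 + ln s) / s) + M / s).
    set (dT := fun s => dh s + c3 * (ln s / s ^ 2) - M / s ^ 2).
    assert (HT : forall s, 1 <= s -> is_derive T s (dT s)).
    { intros s Hs. unfold T. auto_derive.
      { repeat split; try lra. exists (dh s). apply Hh1; lra. }
      change (Derive (fun x => h1 x)) with (Derive h1). rewrite (is_derive_unique _ _ _ (Hh1 s Hs)).
      unfold dT. field. lra. }
    assert (TT : tends T 0).
    { apply (tends_ext (fun s => (h1 s - K) - c3 * (/ s + ln s / s) + M * / s)).
      { exists 1. intros s Hs. unfold T. field. lra. }
      replace 0 with ((K - K) - c3 * (0 + 0) + M * 0) by ring.
      apply tends_plus; [apply tends_minus|].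
      - apply tends_minus; auto. apply tends_const.
      - apply tends_mult; [apply tends_const|]. apply tends_plus; [apply tends_invs|apply tends_lns].
      - apply tends_mult; [apply tends_const|apply tends_invs]. }
    assert (TdT : tends (fun s => s ^ 2 * dT s) 0).
    { apply (tends_ext (fun s => c2 * h1 s * (s / W s) + (s / W s) * (s / W s) * G s * / k
          + c3 * (h1 s * (ln s / s) * (s / W s) - c2 * (ln s * ln s / s) * (s / W s)) - M)).
      { exists 1. intros s Hs. specialize (HWp s). unfold dT, dh, h1, G, M, c3, c1, c2, e1. field.
        repeat split; lra. }
      replace 0 with (c2 * K * / c1 + / c1 * / c1 * e2 * / k + c3 * (K * 0 * / c1 - c2 * 0 * / c1) - M)
        by (unfold M; field; split; lra).
      apply tends_minus; [|apply tends_const].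
      apply tends_plus; [apply tends_plus|].
      - apply tends_mult; auto. apply tends_mult; auto. apply tends_const.
      - apply tends_mult; [|apply tends_const]. apply tends_mult; auto. apply tends_mult; auto.
      - apply tends_mult; [apply tends_const|]. apply tends_minus.
        + apply tends_mult; auto. apply tends_mult; auto. apply tends_lns.
        + apply tends_mult; auto. apply tends_mult; [apply tends_const|apply tends_ln2s]. }
    assert (HsT := sT_lemma T dT 1 HT TT TdT).
    apply (tends_ext (fun s => s * T s)); auto.
    exists 1. intros s Hs. unfold T. field. lra.
Qed.

Lemma at_right_eps (f : R -> R) (l eps : R) : filterlim f (at_right 0) (locally l) -> 0 < eps ->
  exists del, 0 < del /\ forall y, 0 < y < del -> Rabs (f y - l) < eps.
Proof.
  intros H He. assert (H1 := H (fun y => Rabs (y - l) < eps)).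
  destruct H1 as [d Hd]. { exists (mkposreal eps He). intros y Hy. exact Hy. }
  exists d. split; [apply cond_pos|]. intros y Hy. apply Hd; [|lra].
  change (Rabs (y - 0) < d). rewrite Rminus_0_r, Rabs_right; lra.
Qed.

Lemma isd_plc (f : R -> R) (x df c : R) : is_derive f x df -> is_derive (fun t => c + f t) x df.
Proof.
  intros H1. auto_derive. { exists df; auto. }
  change (Derive (fun x => f x)) with (Derive f).
  rewrite (is_derive_unique _ _ _ H1). ring.
Qed.

Theorem lemma2p8 (n : nat) (m lambda beta : R) (v : R -> R) :
  (3 <= n)%nat ->
  0 < m -> m < (INR n - 2) / INR n -> m <> (INR n - 2) / (INR n + 2) ->
  0 < lambda -> 0 < beta ->
  radial_sol n m beta lambda v ->
  (exists K : R, filterlim (h1_fun n m beta v) (Rbar_locally p_infty) (locally K)) /\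
  (forall K : R,
     filterlim (h1_fun n m beta v) (Rbar_locally p_infty) (locally K) ->
     filterlim
       (fun s => s * h2_fun n m beta K v s
                 + (1 - m) * a1 n m beta K / (2 * (INR n - 2 - INR n * m) * beta))
       (Rbar_locally p_infty) (locally 0)).
Proof.
  intros Hn Hm0 Hm1 _ Hlam Hbeta Hsol.
  unfold radial_sol in Hsol. cbv zeta in Hsol.
  destruct Hsol as [Hpos [_ [Hvlim [Hd [Hu0 Heq]]]]].
  set (N := INR n) in *.
  assert (HN : 3 <= N) by (unfold N; replace 3 with (INR 3) by (simpl; ring); apply le_INR; auto).
  assert (HmN : m * N < N - 2).
  { apply (Rmult_lt_compat_r N) in Hm1; [|lra]. unfold Rdiv in Hm1. rewrite Rmult_assoc, Rinv_l in Hm1 by lra. lra. }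
  assert (Hm1' : m < 1) by nra.
  set (u := fun t => Rpower (v t) m).
  assert (HDu : forall r, 0 < r -> Derive u r = m * u r * Derive v r / v r).
  { intros r Hr. destruct (Hd r Hr) as [Dv _]. assert (Hvr := Hpos r ltac:(lra)).
    apply is_derive_unique. unfold u, Rpower. auto_derive. { repeat split; auto. }
    change (Derive (fun x => v x)) with (Derive v). field. lra. }
  assert (Hsys := deriv_sys N m beta v u Hm0 Hm1' ltac:(lra) (fun r Hr => Hpos r ltac:(lra))
                    (fun r Hr => eq_refl) Hd HDu Heq).
  set (Q := fun s => exp s * Derive u (exp s) / u (exp s)) in *.
  set (k := m / (1 - m)). set (b := beta / (N - 1)). set (al := 2 * k * (N - 2 - 2 * k)).
  set (ga := 2 - N + 4 * k).
  set (W := w_fun m v). set (Z := fun s => 2 * k + Q s).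
  assert (Hk : 0 < k) by (unfold k; apply Rdiv_lt_0_compat; lra).
  assert (Hk2 : 2 * k < N - 2).
  { unfold k. apply (Rmult_lt_reg_r (1 - m)); [lra|]. replace (2 * (m / (1 - m)) * (1 - m)) with (2 * m) by (field; lra). nra. }
  assert (HS : sysH k b al ga W Z).
  { split; [auto|]. split; [unfold b; apply Rdiv_lt_0_compat; lra|]. split; [unfold al; nra|].
    split; [|split].
    - intros s. destruct (Hsys s) as [H1 _].
      replace (W s * Z s / k) with (W s * (2 + (1 - m) / m * Q s)).
      + exact H1.
      + unfold Z, k. field. lra.
    - intros s. destruct (Hsys s) as [_ H2]. unfold Z. apply isd_plc.
      replace (al + ga * (2 * k + Q s) - (2 * k + Q s) ^ 2 - b * W s * (2 * k + Q s))
        with ((2 - N) * Q s - Q s ^ 2 - beta / (N - 1) * W s * (2 * m / (1 - m) + Q s)).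
      + exact H2.
      + unfold al, ga, b, k. field. lra.
    - intros s. unfold W, w_fun, Rpower. apply Rmult_lt_0_compat; apply exp_pos. }
  assert (Hs0 : exists s0, 0 < Z s0).
  { destruct (at_right_eps _ _ 1 Hu0 ltac:(lra)) as [d1 [Hd1 H1]].
    destruct (at_right_eps _ _ (lambda / 2) Hvlim ltac:(lra)) as [d2 [Hd2 H2]].
    set (u0 := exp (m * ln (lambda / 2))).
    assert (Hu0p : 0 < u0) by apply exp_pos.
    set (r := Rmin (Rmin d1 d2 / 2) (k * u0)).
    assert (Hr0 : 0 < r). { unfold r. apply Rmin_case; [|nra]. apply Rmin_case; lra. }
    assert (Hr1 : r < d1). { unfold r. eapply Rle_lt_trans; [apply Rmin_l|]. generalize (Rmin_l d1 d2); lra. }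
    assert (Hr2 : r < d2). { unfold r. eapply Rle_lt_trans; [apply Rmin_l|]. generalize (Rmin_r d1 d2); lra. }
    assert (Hr3 : r <= k * u0) by apply Rmin_r.
    exists (ln r). unfold Z, Q. rewrite exp_ln by auto.
    specialize (H1 r ltac:(lra)). specialize (H2 r ltac:(lra)).
    rewrite Rminus_0_r in H1. apply Rabs_def2 in H1. apply Rabs_def2 in H2.
    assert (Hur : u0 < u r).
    { unfold u0, u, Rpower. apply exp_increasing. apply Rmult_lt_compat_l; auto.
      apply ln_increasing; lra. }
    change (Derive (fun t => Rpower (v t) m) r) with (Derive u r) in H1.
    assert (Hq : - (r * Derive u r / u r) <= k).
    { replace (- (r * Derive u r / u r)) with (r * (- Derive u r) / u r) by (field; lra).
      apply (Rmult_le_reg_r (u r)); [lra|]. unfold Rdiv. rewrite Rmult_assoc, Rinv_l, Rmult_1_r by lra.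
      assert (r * - Derive u r <= r * 1) by (apply Rmult_le_compat_l; lra). nra. }
    lra. }
  destruct Hs0 as [s0 Hs0].
  pose proof (final_abstract k b al ga W Z s0 HS Hs0) as FF. cbv zeta in FF.
  destruct FF as [FA FB].
  assert (HNm : 0 < N - 2 - N * m) by lra.
  assert (Ec1 : al / (b * k) = 2 * (INR n - 1) * (INR n - 2 - INR n * m) / ((1 - m) * beta)).
  { fold N. unfold al, b, k. field. repeat split; lra. }
  assert (Ec2 : - ga / b = (INR n - 1) * (INR n - 2 - (INR n + 2) * m) / ((1 - m) * beta)).
  { fold N. unfold ga, b, k. field. repeat split; lra. }
  assert (Eh1 : forall s, W s - al / (b * k) * s + - ga / b * ln s = h1_fun n m beta v s).
  { intros s. unfold h1_fun, h_fun. rewrite Ec1, Ec2. unfold W. ring. }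
  split.
  - destruct FA as [K TK]. exists K.
    apply (tends_lim (h1_fun n m beta v) K).
    apply (tends_ext _ _ K (ex_intro _ 0 (fun s _ => Eh1 s)) TK).
  - intros K HK.
    assert (TK : tends (fun s => W s - al / (b * k) * s + - ga / b * ln s) K).
    { apply (tends_ext (h1_fun n m beta v)). { exists 0. intros s _. symmetry. apply Eh1. }
      apply lim_tends. exact HK. }
    specialize (FB K TK).
    apply (tends_lim _ 0).
    refine (tends_ext _ _ 0 _ FB). exists 1. intros s Hs1. cbv beta.
    rewrite Eh1. unfold h2_fun, a1. fold N. assert (N - 2 - 2 * (m / (1 - m)) <> 0) by (fold k; lra). unfold ga, al, b, k. field. repeat split; try lra; auto.
Qed.
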